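(* Let $L$ be a finite-dimensional pure, nonnilpotent, solvable Lie algebra over $\mathbb{C}$ of breadth $2$ such that $\dim[L,L]=2$ and $\dim L^k=2$ for all integers $k\geq 2$. Then $Z(L)=\{0\}$ and $C_L([L,L])$ is an abelian ideal of $L$.
   Context: For $x\in L$, $b(x)=\mathrm{rank}(\mathrm{ad}_x)$ and the breadth of $L$ is $b(L)=\max\{b(x)\mid x\in L\}$. $L$ is pure if it has no abelian ideal as a direct summand; equivalently $Z(L)\subseteq[L,L]$, where $Z(L)$ is the center. The lower central series is indexed by $L^0=L$, $L^1=[L,L]$, $L^k=[L,L^{k-1}]$ for $k\geq 2$. $C_L(S)$ denotes the centralizer of a subset $S$ in $L$. *)

(* Defs.v *)
From mathcomp Require Import all_boot all_algebra.
From mathcomp Require Import complex.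
From mathcomp Require Import Rstruct.
Set Implicit Arguments. Unset Strict Implicit. Unset Printing Implicit Defensive.
Import GRing.Theory.
Local Open Scope ring_scope.

Notation Cplx := (Rdefinitions.R[i]).

Section Lie.
Variable (F : fieldType) (L : vectType F) (br : L -> L -> L).

Definition is_lie_bracket : Prop :=
  [/\ (forall (a : F) x y z, br (a *: x + y) z = a *: br x z + br y z),
      (forall (a : F) x y z, br x (a *: y + z) = a *: br x y + br x z),
      (forall x, br x x = 0) &
      (forall x y z, br x (br y z) + br y (br z x) + br z (br x y) = 0)].

(* [U, V] : the subspace spanned by all brackets [u, v], u in U, v in V
   (spanned by the brackets of basis vectors, by bilinearity). *)
Definition lie_comm (U V : {vspace L}) : {vspace L} :=
  <<[seq br u v | u <- vbasis U, v <- vbasis V]>>%VS.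

Fixpoint lcs (k : nat) : {vspace L} :=
  if k is k'.+1 then lie_comm fullv (lcs k') else fullv.

Fixpoint dser (k : nat) : {vspace L} :=
  if k is k'.+1 then lie_comm (dser k') (dser k') else fullv.

Definition lie_nilpotent : Prop := exists k, lcs k = 0%VS.
Definition lie_solvable : Prop := exists k, dser k = 0%VS.

Definition ad (x : L) : 'End(L) := linfun (br x).
Definition lie_b (x : L) : nat := \dim (limg (ad x)).
Definition has_breadth (n : nat) : Prop :=
  (forall x, (lie_b x <= n)%N) /\ exists x, lie_b x = n.

Definition lie_ideal (I : {vspace L}) : Prop :=
  forall x y, y \in I -> br x y \in I.
Definition lie_abelian (I : {vspace L}) : Prop :=
  forall x y, x \in I -> y \in I -> br x y = 0.

Definition lie_pure : Prop :=
  ~ exists I J : {vspace L},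
      [/\ I != 0%VS, lie_ideal I, lie_abelian I, lie_ideal J &
          ((I + J)%VS = fullv /\ (I :&: J)%VS = 0%VS)].

Definition in_center (z : L) : Prop := forall y, br z y = 0.

Definition in_centralizer (S : {vspace L}) (x : L) : Prop :=
  forall y, y \in S -> br x y = 0.
End Lie.

(* Main.v *)
Require Import Defs.
From mathcomp Require Import all_boot all_algebra.
From mathcomp Require Import complex.
From mathcomp Require Import Rstruct.
From Stdlib Require Import Classical.
Import GRing.Theory.
Local Open Scope ring_scope.

Section Helpers.
Set Implicit Arguments.
Variable (F : fieldType) (L : vectType F) (br : L -> L -> L).
Hypothesis Hl : is_lie_bracket br.

Lemma brDl x y z : br (x + y) z = br x z + br y z.
Proof. case: Hl => H1 _ _ _. by have := H1 1 x y z; rewrite !scale1r. Qed.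
Lemma brDr x y z : br z (x + y) = br z x + br z y.
Proof. case: Hl => _ H2 _ _. by have := H2 1 z x y; rewrite !scale1r. Qed.
Lemma br0l z : br 0 z = 0.
Proof.
have := brDl 0 0 z; rewrite addr0.
by move=> /(congr1 (fun t => t - br 0 z)); rewrite addrK subrr.
Qed.
Lemma br0r z : br z 0 = 0.
Proof.
have := brDr 0 0 z; rewrite addr0.
by move=> /(congr1 (fun t => t - br z 0)); rewrite addrK subrr.
Qed.
Lemma brZl a x z : br (a *: x) z = a *: br x z.
Proof. case: Hl => H1 _ _ _. by have := H1 a x 0 z; rewrite !addr0 br0l addr0. Qed.
Lemma brZr a x z : br z (a *: x) = a *: br z x.
Proof. case: Hl => _ H2 _ _. by have := H2 a z x 0; rewrite !addr0 br0r addr0. Qed.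
Lemma brxx x : br x x = 0.
Proof. by case: Hl. Qed.
Lemma brN x y : br x y = - br y x.
Proof.
have := brxx (x + y); rewrite brDl !brDr !brxx add0r addr0 => /eqP.
by rewrite addr_eq0 => /eqP.
Qed.
Lemma brNr x y : br x (- y) = - br x y.
Proof. by rewrite -scaleN1r brZr scaleN1r. Qed.
Lemma jacobi x y z : br x (br y z) + br y (br z x) + br z (br x y) = 0.
Proof. by case: Hl. Qed.

Lemma br_suml I r P (G : I -> L) z :
  br (\sum_(i <- r | P i) G i) z = \sum_(i <- r | P i) br (G i) z.
Proof. exact: (big_morph (fun x => br x z) (fun x y => brDl x y z) (br0l z)). Qed.
Lemma br_sumr I r P (G : I -> L) z :
  br z (\sum_(i <- r | P i) G i) = \sum_(i <- r | P i) br z (G i).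
Proof. exact: (big_morph (fun x => br z x) (fun x y => brDr x y z) (br0r z)). Qed.

Lemma mem_comm (U V : {vspace L}) u v :
  u \in U -> v \in V -> br u v \in lie_comm br U V.
Proof.
move=> uU vV; rewrite (coord_vbasis uU) (coord_vbasis vV) br_suml.
apply: memv_suml => i _; rewrite brZl br_sumr; apply: memvZ.
apply: memv_suml => j _; rewrite brZr; apply: memvZ.
apply: memv_span; apply: allpairs_f; apply: mem_nth; by rewrite size_tuple.
Qed.

Lemma comm_sub (U V W : {vspace L}) :
  (forall u v, u \in U -> v \in V -> br u v \in W) -> (lie_comm br U V <= W)%VS.
Proof.
move=> H; apply/span_subvP => x /allpairsP [[u v] [/= uU vV ->]].
by apply: H; apply: vbasis_mem.
Qed.
End Helpers.

Theorem proposition3p5 (L : vectType Cplx) (br : L -> L -> L) :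
  is_lie_bracket br ->
  lie_pure br -> ~ lie_nilpotent br -> lie_solvable br ->
  has_breadth br 2 ->
  \dim (lie_comm br fullv fullv) = 2%N ->
  (forall k : nat, (2 <= k)%N -> \dim (lcs br k) = 2%N) ->
  (forall z : L, in_center br z -> z = 0) /\
  ((forall x y : L, in_centralizer br (lie_comm br fullv fullv) x ->
      in_centralizer br (lie_comm br fullv fullv) y -> br x y = 0) /\
   (forall x y : L, in_centralizer br (lie_comm br fullv fullv) y ->
      in_centralizer br (lie_comm br fullv fullv) (br x y))).
Proof.
move=> Hl Hpure _ _ _ HN Hk.
set N := lie_comm br fullv fullv.
have memN : forall x y, br x y \in N := fun x y => mem_comm Hl (memvf x) (memvf y).
have Z0 : forall z, in_center br z -> z = 0.
  move=> z Hz; case: (eqVneq z 0) => // znz; exfalso.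
  have zN : z \in N.
    apply/negPn/negP => zN; apply: Hpure.
    exists <[z]>%VS, (N + (<[z]> + N)^C)%VS; split.
    - by rewrite -dimv_eq0 dim_vline znz.
    - move=> x y /vlineP [a ->].
      by rewrite (brZr Hl) (brN Hl) Hz oppr0 scaler0 mem0v.
    - move=> x y /vlineP [a ->] /vlineP [b ->].
      by rewrite (brZl Hl) (brZr Hl) Hz !scaler0.
    - move=> x y _; exact: (subvP (addvSl _ _) _ (memN x y)).
    split; first by rewrite addvA addv_complf.
    apply/eqP; rewrite -subv0; apply/subvP => v /memv_capP [/vlineP [a ->]].
    move=> /memv_addP [n nN [c cC E]].
    have : c \in ((<[z]> + N) :&: (<[z]> + N)^C)%VS.
      apply/memv_capP; split => //.
      have -> : c = a *: z - n by rewrite E addrC addKr.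
      apply: memvB; first exact: (subvP (addvSl _ _) _ (memvZ _ (memv_line z))).
      exact: (subvP (addvSr _ _) _ nN).
    rewrite capv_compl memv0 => /eqP c0.
    case: (eqVneq a 0) => [-> | anz]; first by rewrite scale0r memv0.
    exfalso; apply/negP: zN; apply/negPn.
    have -> : z = a^-1 *: (a *: z) by rewrite scalerA mulVf // scale1r.
    by apply: memvZ; rewrite E c0 addr0.
  have : ~~ (N <= <[z]>)%VS.
    by apply/negP => /dimvS; rewrite dim_vline znz HN.
  case/subvPn => w wN wz.
  have decomp : forall n, n \in N -> exists a b, n = a *: z + b *: w.
    have SN : (<[z]> + <[w]> <= N)%VS by rewrite subv_add -!memvE zN wN.
    have wnz : w != 0 by apply: contraNneq wz => ->; rewrite mem0v.
    have dS : \dim (<[z]> + <[w]>) = 2%N.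
      rewrite dimv_disjoint_sum ?dim_vline ?znz ?wnz //.
      apply/eqP; rewrite -subv0; apply/subvP => v /memv_capP [/vlineP [a ->] /vlineP [b E]].
      case: (eqVneq b 0) => [b0 | bnz]; first by rewrite E b0 scale0r memv0.
      exfalso; apply/negP: wz; apply/negPn.
      have -> : w = b^-1 *: (b *: w) by rewrite scalerA mulVf // scale1r.
      by apply: memvZ; rewrite -E memvZ // memv_line.
    have eS : (<[z]> + <[w]>)%VS = N.
      by apply/eqP; rewrite eqEdim SN dS HN leqnn.
    move=> n; rewrite -eS => /memv_addP [u /vlineP [a ->] [v /vlineP [b ->] ->]].
    by exists a, b.
  have bwz : forall x, br x z = 0 by move=> x; rewrite (brN Hl) Hz oppr0.
  have key : forall x y, br x (br y w) = br y (br x w).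
    move=> x y; have := jacobi Hl x y w.
    have [a [b E]] := decomp _ (memN x y).
    rewrite E (brDr Hl) !(brZr Hl) bwz (brxx Hl) !scaler0 addr0.
    rewrite [br w x](brN Hl) (brNr Hl) => J.
    by apply/eqP; rewrite -subr_eq0 -J addr0.
  have bn : forall u n, n \in N -> exists b, br u n = b *: br u w.
    move=> u n /decomp [a [b ->]]; exists b.
    by rewrite (brDr Hl) !(brZr Hl) bwz scaler0 add0r.
  have H2 := Hk 2%N (leqnn _).
  case: (classic (exists x0, br x0 w != 0)) => [[x0 nz] | H0].
    have sub : (lcs br 2 <= <[br x0 w]>)%VS.
      apply: comm_sub => u n _ nN.
      have [b ->] := bn u n nN; apply: memvZ.
      have [a [b' Ex]] := decomp _ (memN x0 w).
      have [c [d Eu]] := decomp _ (memN u w).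
      have := key x0 u.
      rewrite {1}Eu {1}Ex (brDr Hl) !(brZr Hl) bwz scaler0 add0r.
      rewrite (brDr Hl) !(brZr Hl) bwz scaler0 add0r => E.
      apply/vlineP.
      case: (eqVneq b' 0) => [b0 | bnz].
        move: E; rewrite b0 scale0r => /eqP; rewrite scaler_eq0 (negbTE nz) orbF => /eqP d0.
        have anz : a != 0 by apply: contraNneq nz => a0; rewrite Ex a0 b0 !scale0r addr0.
        exists (c / a); rewrite Eu d0 scale0r addr0 Ex b0 scale0r addr0 scalerA.
        by rewrite divfK.
      by exists (d / b'); rewrite mulrC -scalerA E scalerA mulVf // scale1r.
    by move: (dimvS sub); rewrite H2 dim_vline nz.
  have sub : (lcs br 2 <= 0)%VS.
    apply: comm_sub => u n _ nN.
    have [b ->] := bn u n nN.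
    have -> : br u w = 0.
      by apply/eqP; apply/negPn/negP => nz; apply: H0; exists u.
    by rewrite scaler0 mem0v.
  by move: (dimvS sub); rewrite H2 dimv0.
split=> //; split.
  move=> x y Cx Cy; apply: Z0 => w.
  have := jacobi Hl w x y.
  rewrite (Cx (br y w) (memN _ _)) (Cy (br w x) (memN _ _)) !addr0 => E.
  by rewrite (brN Hl) E oppr0.
move=> x y Cy u uN.
have := jacobi Hl u x y.
have bux : br u x \in N by apply: memN.
rewrite (Cy u uN) (br0r Hl) (Cy _ bux) !addr0.
move=> E; by rewrite (brN Hl) E oppr0.
Qed.
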